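(* Suppose the p-values are conditionally super-uniform: for every $t$ with $\theta_t=0$, $\mathbb{P}(p_t\le u\mid\mathcal{F}_{t-1})\le u$ a.s. for all $u\in[0,1]$ (equivalently, for every $\mathcal F_{t-1}$-measurable $[0,1]$-valued $U$, $\mathbb{P}(p_t\le U\mid\mathcal{F}_{t-1})\le U$). Let $\mathrm{FDP}^*_{\mathrm{e}}(t)=\sum_{j\in\mathcal{H}_0(t)}\frac{\alpha_j}{R_{j-1}+1}$. Then for every $t\ge1$: if $\mathbb{E}[\mathrm{FDP}^*_{\mathrm{e}}(t)]\le\alpha$, then $\mathrm{FDR}(t)\le\alpha$.
   Context: Let $\alpha\in(0,1)$ be a target level. Hypotheses are indexed by $t=1,2,\dots$; $\theta_t\in\{0,1\}$ is a fixed (non-random) indicator with $\theta_t=0$ iff the $t$-th null hypothesis is true. $p_1,p_2,\dots$ are $[0,1]$-valued random variables (p-values). Testing levels $\alpha_1,\alpha_2,\dots$ are $[0,1]$-valued random variables and the decisions are $\delta_t=\mathbb{1}\{p_t\le\alpha_t\}$. Let $\mathcal{F}_t=\sigma(\delta_1,\dots,\delta_t)$, $\mathcal{F}_0$ trivial; each $\alpha_t$ is required to be $\mathcal{F}_{t-1}$-measurable. $R_t=\sum_{j=1}^t\delta_j$, $R_0=0$. $\mathcal{H}_0(t)=\{j\le t:\theta_j=0\}$. $\mathrm{FDR}(t)=\mathbb{E}\big[\sum_{j\in\mathcal{H}_0(t)}\delta_j/(R_t\vee 1)\big]$. *)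

(* Defs.v *)
From HB Require Import structures.
From mathcomp Require Import all_boot all_order all_algebra.
From mathcomp Require Import all_classical all_reals all_analysis.
Set Implicit Arguments. Unset Strict Implicit. Unset Printing Implicit Defensive.
Import Order.TTheory GRing.Theory Num.Theory.
Local Open Scope classical_set_scope.
Local Open Scope ring_scope.

Section OnlineFDR.
Context {d : measure_display} {T : measurableType d} {R : realType}.
Variables (theta : nat -> bool) (p a : nat -> T -> R).
(* Hypotheses indexed by t = 1,2,...; index 0 is unused.
   theta j = false  <->  the j-th null hypothesis is true (theta_j = 0). *)

Definition delta (j : nat) (x : T) : R := if p j x <= a j x then 1 else 0.

Definition Rcount (t : nat) (x : T) : R := \sum_(1 <= j < t.+1) delta j x.

Definition Vcount (t : nat) (x : T) : R :=
  \sum_(1 <= j < t.+1 | ~~ theta j) delta j x.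

Definition FDP (t : nat) (x : T) : R := Vcount t x / Num.max (Rcount t x) 1.

Definition FDPe (t : nat) (x : T) : R :=
  \sum_(1 <= j < t.+1 | ~~ theta j) a j x / (Rcount j.-1 x + 1).

(* F_t = sigma(delta_1, ..., delta_t): the sigma-algebra on T generated by
   the events {delta_j = 1} = {p_j <= alpha_j}, 1 <= j <= t (F_0 trivial). *)
Definition filt (t : nat) : set (set T) :=
  <<s [set A | exists2 j : nat, (1 <= j <= t)%N & A = [set x | p j x <= a j x]] >>.
End OnlineFDR.

Definition F_measurable {T : Type} {R : realType} (F : set (set T)) (f : T -> R) :=
  forall B : set R, measurable B -> F (f @^-1` B).

(* Main.v *)
Require Import Defs.
From HB Require Import structures.
From mathcomp Require Import all_boot all_order all_algebra.
From mathcomp Require Import all_classical all_reals all_analysis.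
Import Order.TTheory GRing.Theory Num.Theory.
Local Open Scope classical_set_scope.
Local Open Scope ring_scope.


Section Proof3.
Context (d : measure_display) (T : measurableType d) (R : realType).
Variables (theta : nat -> bool) (p a : nat -> T -> R).

Lemma sgI (G : set (set T)) A B : <<s G >> A -> <<s G >> B -> <<s G >> (A `&` B).
Proof. exact: (@measurableI _ (g_sigma_algebraType G)). Qed.
Lemma sgU (G : set (set T)) A B : <<s G >> A -> <<s G >> B -> <<s G >> (A `|` B).
Proof. exact: (@measurableU _ (g_sigma_algebraType G)). Qed.
Lemma sgC (G : set (set T)) A : <<s G >> A -> <<s G >> (~` A).
Proof. exact: (@measurableC _ (g_sigma_algebraType G)). Qed.
Lemma sgT (G : set (set T)) : <<s G >> setT.
Proof. exact: (@measurableT _ (g_sigma_algebraType G)). Qed.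
Lemma sg0 (G : set (set T)) : <<s G >> set0.
Proof. exact: (@measurable0 _ (g_sigma_algebraType G)). Qed.

Definition E j := [set x | p j x <= a j x].

Lemma filt_mono m n : (m <= n)%N -> filt p a m `<=` filt p a n.
Proof.
move=> mn; apply: sub_sigma_algebra2 => A [j /andP[j1 jm] ->].
by exists j => //; rewrite j1 (leq_trans jm mn).
Qed.

Lemma filtE j m : (1 <= j <= m)%N -> filt p a m (E j).
Proof. by move=> jm; apply: sub_sigma_algebra; exists j. Qed.

Lemma deltaE j x : delta p a j x = \1_(E j) x.
Proof.
rewrite indicE /delta; case: ifPn => h.
  by rewrite mem_set.
by rewrite memNset //= /E /=; apply/negP.
Qed.

Lemma Rcount0 x : Rcount p a 0 x = 0.
Proof. by rewrite /Rcount big_geq. Qed.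

Lemma RcountS m x : Rcount p a m.+1 x = Rcount p a m x + delta p a m.+1 x.
Proof. by rewrite /Rcount big_nat_recr. Qed.

Lemma delta01 j x : delta p a j x = 0 \/ delta p a j x = 1.
Proof. by rewrite /delta; case: ifP; [right|left]. Qed.

Lemma Rcount_nat m x : exists2 n, (n < m.+1)%N & Rcount p a m x = n%:R.
Proof.
elim: m => [|m [n nm Hn]]; first by exists 0%N => //; rewrite Rcount0.
rewrite RcountS Hn; case: (delta01 m.+1 x) => ->.
  by exists n; rewrite ?addr0 // ltnS ltnW.
by exists n.+1; rewrite ?ltnS // -natr1.
Qed.

Lemma Rlevel m k : filt p a m [set x | Rcount p a m x = k].
Proof.
elim: m k => [|m IH] k.
  have [->|k0] := eqVneq k 0.
    rewrite (_ : [set _ | _] = setT); first exact: sgT.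
    by apply/seteqP; split => x //= _; rewrite Rcount0.
  rewrite (_ : [set _ | _] = set0); first exact: sg0.
  by apply/seteqP; split => x //=; rewrite Rcount0 => /esym/eqP; rewrite (negbTE k0).
rewrite (_ : [set _ | _] = ([set x | Rcount p a m x = k] `&` ~` E m.+1) `|`
   ([set x | Rcount p a m x = k - 1] `&` E m.+1)).
  have hE : filt p a m.+1 (E m.+1) by apply: filtE; rewrite leqnn.
  have hm := @filt_mono _ _ (leqnSn m).
  apply: sgU; apply: sgI => //; [exact: hm| exact: sgC| exact: hm].
apply/seteqP; split => x /=; rewrite RcountS /delta /E /=.
  case: ifPn => h.
    by move=> <-; right; split => //; rewrite addrK.
  by rewrite addr0 => ->; left; split => //; apply/negP.
case: ifPn => h [[-> hE]|[-> hE]].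
- by exfalso; apply: hE.
- by rewrite subrK.
- by rewrite addr0.
- by move/negP: h.
Qed.


Hypothesis Hp : forall t, measurable_fun setT (p t).
Hypothesis Ham : forall t, (1 <= t)%N -> F_measurable (filt p a t.-1) (a t).

Lemma filt_meas_aux m : (forall A, filt p a m A -> measurable A).
Proof.
elim: m => [|m IH].
  apply: smallest_sub; first exact: sigma_algebra_measurable.
  by move=> A [j /andP[j1 j0]]; move: (leq_trans j1 j0).
apply: smallest_sub; first exact: sigma_algebra_measurable.
move=> A [j /andP[j1 jm] ->].
have ma : measurable_fun setT (a j).
  move=> _ B mB; rewrite setTI.
  have hj := @Ham j j1 B mB.
  apply: IH; move: hj; apply: filt_mono.
  by rewrite -ltnS prednK.
by have := measurable_fun_le measurableT (Hp j) ma; rewrite setTI.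
Qed.

Lemma a_meas j : (1 <= j)%N -> measurable_fun setT (a j).
Proof. by move=> j1 _ B mB; rewrite setTI; apply: (@filt_meas_aux j.-1); exact: (@Ham j j1 B mB). Qed.

Lemma E_meas j : (1 <= j)%N -> measurable (E j).
Proof. by move=> j1; apply: (@filt_meas_aux j); apply: filtE; rewrite j1 leqnn. Qed.

Lemma Rlevel_meas m k : measurable [set x | Rcount p a m x = k].
Proof. exact: (@filt_meas_aux m _ (Rlevel m k)). Qed.

Lemma meas_sum (s : seq nat) (P : pred nat) (h : nat -> T -> R) :
  (forall i, i \in s -> P i -> measurable_fun setT (h i)) ->
  measurable_fun setT (fun x => \sum_(i <- s | P i) h i x).
Proof.
elim: s => [|i s IH] hm.
  by under eq_fun do rewrite big_nil; exact: measurable_cst.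
under eq_fun do rewrite big_cons.
case Pi: (P i) => /=.
  apply: measurable_realfun.measurable_funD; first by apply: hm => //; rewrite mem_head.
  by apply: IH => j js; apply: hm; rewrite inE js orbT.
by apply: IH => j js; apply: hm; rewrite inE js orbT.
Qed.

Lemma decomp (f : T -> R) N (g : R -> R) x :
  (exists2 n, (n < N)%N & f x = n%:R) ->
  g (f x) = \sum_(k < N) g k%:R * \1_[set y | f y = k%:R] x.
Proof.
move=> [n nN fx].
rewrite (bigD1 (Ordinal nN)) //= big1 ?addr0.
  by rewrite indicE mem_set ?mulr1 ?fx.
move=> k /negP kn; rewrite indicE memNset ?mulr0 //= fx => /eqP.
rewrite eqr_nat => /eqP nk; apply: kn; apply/eqP/val_inj => /=; by rewrite nk.
Qed.

Variable (P : probability T R).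
Hypothesis Ha01 : forall t x, 0 <= a t x <= 1.
Hypothesis Hsu : forall t, (1 <= t)%N -> ~~ theta t ->
     forall U : T -> R, F_measurable (filt p a t.-1) U ->
     (forall x, 0 <= U x <= 1) ->
     forall A, filt p a t.-1 A ->
     (P (A `&` [set x | (p t x <= U x)%R]) <= \int[P]_(x in A) (U x)%:E)%E.

Local Open Scope ereal_scope.

Lemma int_indic_c (c : R) (B : set T) : (0 <= c)%R -> measurable B ->
  \int[P]_x ((c * \1_B x)%:E) = c%:E * P B.
Proof.
move=> c0 mB; under eq_integral do rewrite EFinM.
rewrite ge0_integralZl_EFin //.
- by rewrite integral_indic // setIT.
- by apply/measurable_realfun.measurable_EFinP; exact: measurable_realfun.measurable_indic.
Qed.

Lemma int_a_c (c : R) j (B : set T) : (1 <= j)%N -> (0 <= c)%R -> measurable B ->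
  \int[P]_x ((c * (a j x * \1_B x))%:E) = c%:E * \int[P]_(x in B) (a j x)%:E.
Proof.
move=> j1 c0 mB; under eq_integral do rewrite EFinM.
rewrite ge0_integralZl_EFin //.
- congr (_ * _); rewrite [in RHS]integral_mkcond; apply: eq_integral => x _.
  rewrite /patch indicE; case: (x \in B) => /=; by rewrite ?mulr1 ?mulr0.
- move=> x _; rewrite lee_fin indicE mulr_ge0 //; by case/andP: (Ha01 j x).
- apply/measurable_realfun.measurable_EFinP; apply: measurable_realfun.measurable_funM.
    exact: a_meas.
  exact: measurable_realfun.measurable_indic.
Qed.

Lemma key j : (1 <= j)%N -> ~~ theta j ->
  \int[P]_x (delta p a j x / (Rcount p a j.-1 x + 1))%:E <=
  \int[P]_x (a j x / (Rcount p a j.-1 x + 1))%:E.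
Proof.
move=> j1 nj; set m := j.-1.
pose A k := [set y | Rcount p a m y = (k%:R : R)].
have dec x : ((Rcount p a m x + 1)^-1 =
    \sum_(k < m.+1) (k%:R + 1)^-1 * \1_(A k) x)%R.
  exact: (@decomp (Rcount p a m) m.+1 (fun r : R => ((r + 1)^-1)%R) x (Rcount_nat m x)).
have cpos (k : nat) : (0 <= ((k%:R : R) + 1)^-1)%R.
  by rewrite invr_ge0 addr_ge0.
have mA k : measurable (A k) by exact: Rlevel_meas.
have Lx x : (delta p a j x / (Rcount p a m x + 1))%:E =
    \sum_(k < m.+1) (((k%:R : R) + 1)^-1 * \1_(A k `&` E j) x)%:E.
  rewrite sumEFin dec mulr_sumr; congr EFin; apply: eq_bigr => k _.
  by rewrite indicI deltaE /= mulrCA (mulrC (\1_(E j) x)).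
have Rx x : (a j x / (Rcount p a m x + 1))%:E =
    \sum_(k < m.+1) (((k%:R : R) + 1)^-1 * (a j x * \1_(A k) x))%:E.
  rewrite sumEFin dec mulr_sumr; congr EFin; apply: eq_bigr => k _.
  by rewrite mulrCA.
under eq_integral => x _ do rewrite Lx.
under [X in _ <= X]eq_integral => x _ do rewrite Rx.
rewrite ge0_integral_sum //; last first.
  move=> k; apply/measurable_realfun.measurable_EFinP.
  apply: measurable_realfun.measurable_funM; first exact: measurable_cst.
  apply: measurable_realfun.measurable_indic; apply: measurableI => //.
  exact: E_meas.
rewrite ge0_integral_sum //; last 2 first.
- move=> k; apply/measurable_realfun.measurable_EFinP.
  apply: measurable_realfun.measurable_funM; first exact: measurable_cst.
  apply: measurable_realfun.measurable_funM; first exact: a_meas.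
  exact: measurable_realfun.measurable_indic.
- move=> k x _; rewrite lee_fin mulr_ge0 // mulr_ge0 // ?indicE //.
  by case/andP: (Ha01 j x).
apply: lee_sum => k _.
rewrite int_indic_c //; last by apply: measurableI => //; exact: E_meas.
rewrite int_a_c //.
apply: lee_wpmul2l; first by rewrite lee_fin.
apply: Hsu => //.
- exact: Ham.
- exact: Rlevel.
Qed.



Lemma delta_ge0 j x : (0 <= delta p a j x)%R.
Proof. by case: (delta01 j x) => ->. Qed.

Lemma Rcount_ge0 m x : (0 <= Rcount p a m x)%R.
Proof. by case: (Rcount_nat m x) => n _ ->. Qed.

Lemma Rcount_mono m n x : (m <= n)%N -> (Rcount p a m x <= Rcount p a n x)%R.
Proof.
elim: n => [|n IH]; first by rewrite leqn0 => /eqP ->.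
rewrite leq_eqVlt => /orP[/eqP -> //|]; rewrite ltnS => /IH h.
by rewrite RcountS (le_trans h) // lerDl delta_ge0.
Qed.

Lemma inv_meas (g : R -> R) m : measurable_fun setT (fun x => g (Rcount p a m x)).
Proof.
rewrite (_ : (fun x => _) = (fun x => \sum_(k < m.+1) g k%:R * \1_[set y | Rcount p a m y = k%:R] x)%R).
  apply: measurable_sum => k; apply: measurable_realfun.measurable_funM.
    exact: measurable_cst.
  apply: measurable_realfun.measurable_indic; exact: Rlevel_meas.
apply/funext => x; exact: (@decomp (Rcount p a m) m.+1 g x (Rcount_nat m x)).
Qed.

Lemma delta_meas j : (1 <= j)%N -> measurable_fun setT (delta p a j).
Proof.
move=> j1; rewrite (_ : delta p a j = \1_(E j)); last by apply/funext => x; rewrite deltaE.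
by apply: measurable_realfun.measurable_indic; exact: E_meas.
Qed.

Lemma int_sum (s : seq nat) (Pr : pred nat) (h : nat -> T -> R) :
  (forall i, i \in s -> Pr i -> measurable_fun setT (h i)) ->
  (forall i x, i \in s -> Pr i -> (0 <= h i x)%R) ->
  \int[P]_x (\sum_(i <- s | Pr i) h i x)%:E = \sum_(i <- s | Pr i) \int[P]_x (h i x)%:E.
Proof.
elim: s => [|i s IH] hm h0.
  under eq_integral do rewrite big_nil.
  by rewrite big_nil integral0.
have hm' : forall j, j \in s -> Pr j -> measurable_fun setT (h j).
  by move=> j js; apply: hm; rewrite inE js orbT.
have h0' : forall j x, j \in s -> Pr j -> (0 <= h j x)%R.
  by move=> j x js; apply: h0; rewrite inE js orbT.
rewrite big_cons; case Pi: (Pr i); last first.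
  under eq_integral do rewrite big_cons Pi.
  exact: IH.
under eq_integral do rewrite big_cons Pi EFinD.
rewrite ge0_integralD //.
- by rewrite IH.
- by move=> x _; rewrite lee_fin; apply: h0 => //; rewrite mem_head.
- by apply/measurable_realfun.measurable_EFinP; apply: hm => //; rewrite mem_head.
- move=> x _; rewrite lee_fin big_seq_cond; apply: sumr_ge0 => k /andP[ks Pk].
  exact: h0'.
- apply/measurable_realfun.measurable_EFinP; exact: meas_sum.
Qed.

Lemma pointwise t x : (FDP theta p a t x <=
  \sum_(1 <= j < t.+1 | ~~ theta j) (delta p a j x / (Rcount p a j.-1 x + 1)))%R.
Proof.
rewrite /FDP /Vcount mulr_suml big_nat_cond [X in (_ <= X)%R]big_nat_cond.
apply: ler_sum => j /andP[/andP[j1 jt] nj].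
case: (delta01 j x) => hd; first by rewrite hd !mul0r.
rewrite hd !mul1r lef_pV2 ?posrE; last 2 first.
- by rewrite lt_max ltr01 orbT.
- by apply: ltr_wpDl; [exact: Rcount_ge0 | exact: ltr01].
have -> : (Rcount p a j.-1 x + 1 = Rcount p a j x)%R.
  by rewrite -{2}(prednK j1) RcountS prednK // hd.
by rewrite le_max (@Rcount_mono j t x jt).
Qed.

Lemma main t (alpha : R) : (1 <= t)%N ->
  \int[P]_x (FDPe theta p a t x)%:E <= alpha%:E ->
  \int[P]_x (FDP theta p a t x)%:E <= alpha%:E.
Proof.
move=> t1 H; apply: le_trans H.
have hS : \int[P]_x (FDP theta p a t x)%:E <= \int[P]_x
   (\sum_(1 <= j < t.+1 | ~~ theta j) (delta p a j x / (Rcount p a j.-1 x + 1)))%R%:E.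
  apply: ge0_le_integral => //.
  - move=> x _; rewrite lee_fin /FDP divr_ge0 //.
      by apply: sumr_ge0 => j _; exact: delta_ge0.
    by rewrite le_max ler01 orbT.
  - apply/measurable_realfun.measurable_EFinP.
    rewrite (_ : FDP theta p a t = (fun x => Vcount theta p a t x *
       (fun r => (Num.max r 1)^-1) (Rcount p a t x))%R) //.
    apply: measurable_realfun.measurable_funM; last exact: (inv_meas (fun r => (Num.max r 1)^-1)%R t).
    rewrite /Vcount; apply: meas_sum => j; rewrite mem_index_iota => /andP[j1 _] _.
    exact: delta_meas.
  - apply/measurable_realfun.measurable_EFinP.
    apply: meas_sum => j; rewrite mem_index_iota => /andP[j1 _] _.
    apply: measurable_realfun.measurable_funM; first exact: delta_meas.
    exact: (inv_meas (fun r => (r + 1)^-1)%R).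
  - by move=> x _; rewrite lee_fin; exact: pointwise.
apply: (le_trans hS).
rewrite (@int_sum _ _ (fun j x => delta p a j x / (Rcount p a j.-1 x + 1))%R); first last.
- by move=> j x _ _; rewrite divr_ge0 ?delta_ge0 // addr_ge0 ?Rcount_ge0.
- move=> j; rewrite mem_index_iota => /andP[j1 _] _.
  apply: measurable_realfun.measurable_funM; first exact: delta_meas.
  exact: (inv_meas (fun r => (r + 1)^-1)%R).
rewrite /FDPe (@int_sum _ _ (fun j x => a j x / (Rcount p a j.-1 x + 1))%R); first last.
- move=> j x _ _; rewrite divr_ge0 // ?addr_ge0 ?Rcount_ge0 //.
  by case/andP: (Ha01 j x).
- move=> j; rewrite mem_index_iota => /andP[j1 _] _.
  apply: measurable_realfun.measurable_funM; first exact: a_meas.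
  exact: (inv_meas (fun r => (r + 1)^-1)%R).
rewrite big_seq_cond [X in _ <= X]big_seq_cond.
apply: lee_sum => j /andP[]; rewrite mem_index_iota => /andP[j1 _] nj.
exact: key.
Qed.

End Proof3.

Theorem theorem3 (d : measure_display) (T : measurableType d) (R : realType)
  (P : probability T R) (alpha : R) (theta : nat -> bool) (p a : nat -> T -> R) :
  0 < alpha < 1 ->
  (* p-values: [0,1]-valued random variables *)
  (forall t, measurable_fun setT (p t)) ->
  (forall t x, 0 <= p t x <= 1) ->
  (* testing levels: [0,1]-valued, alpha_t is F_{t-1}-measurable *)
  (forall t x, 0 <= a t x <= 1) ->
  (forall t, (1 <= t)%N -> F_measurable (filt p a t.-1) (a t)) ->
  (* conditional super-uniformity: for null t and every F_{t-1}-measurable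
     [0,1]-valued U, P(p_t <= U | F_{t-1}) <= U a.s., i.e.
     E[1{p_t <= U} 1_A] <= E[U 1_A] for all A in F_{t-1} *)
  (forall t, (1 <= t)%N -> ~~ theta t ->
     forall U : T -> R, F_measurable (filt p a t.-1) U ->
     (forall x, 0 <= U x <= 1) ->
     forall A, filt p a t.-1 A ->
     (P (A `&` [set x | (p t x <= U x)%R]) <= \int[P]_(x in A) (U x)%:E)%E) ->
  forall t, (1 <= t)%N ->
    (\int[P]_x (FDPe theta p a t x)%:E <= alpha%:E)%E ->
    (\int[P]_x (FDP theta p a t x)%:E <= alpha%:E)%E.
Proof.
move=> _ Hp _ Ha01 Ham Hsu t t1 H.
exact: (@main d T R theta p a Hp Ham P Ha01 Hsu t alpha t1 H).
Qed.
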